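(* Let $\mathcal{A}$ be an alternating parity automaton and let $\mathcal{B}_{\mathcal{A}}$ be constructed from $\mathcal{A}$ as described in the context. If $\mathcal{B}_{\mathcal{A}}$ is GFG, then $\mathcal{A}$ is $\exists$-GFG.
   Context: An alternating parity automaton $\mathcal{A}=(\Sigma,Q,\iota,\delta,\alpha)$ has finite alphabet $\Sigma$, states $Q$, initial state $\iota$, transition function $\delta\colon Q\times\Sigma\to\mathcal{B}^+(Q)$ (positive Boolean formulas over atoms in $Q$), and priorities $\alpha\colon Q\times\Sigma\times Q\to\Gamma\subseteq\mathbb{N}$ on transitions; a sequence of transitions is accepting iff the maximal priority seen infinitely often is even. The model-checking game on $w=a_0a_1\dots$: from $\iota$, in round $i$ from $q_i$ the players descend $\delta(q_i,a_i)$, Eve choosing at disjunctions, Adam at conjunctions, to an atom $q_{i+1}$; Eve wins iff the transition sequence is accepting; $w\in L(\mathcal{A})$ iff Eve wins. Eve's letter game: each round Adam picks a letter and the players descend the transition condition of the current state over it; Eve wins iff the generated word is not in $L(\mathcal{A})$ or the generated path is accepting; $\mathcal{A}$ is $\exists$-GFG iff Eve wins this game. Boxes: for a letter $a$, a local strategy $\sigma$ chooses for each state $q$ and each subformula $\psi_1\vee\psi_2$ of $\delta(q,a)$ one disjunct; the box $\beta(\mathcal{A},a,\sigma)$ is the set of $(q,a,q')$ such that atom $q'$ is reachable from $\delta(q,a)$ following $\sigma$ at disjunctions and either conjunct at conjunctions; $\mathrm{Boxes}_{\mathcal{A},a}$ is the set of these boxes, $\mathrm{Boxes}_{\mathcal{A}}=\bigcup_a\mathrm{Boxes}_{\mathcal{A},a}$.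 A word $\beta_0\beta_1\dots$ over $\mathrm{Boxes}_{\mathcal{A}}$ is universally accepting if every transition sequence $(q_i,a_i,q_{i+1})$ with $q_0=\iota$ and $(q_i,a_i,q_{i+1})\in\beta_i$ is accepting. Construction: let $\mathcal{B}$ be a deterministic parity automaton over alphabet $\mathrm{Boxes}_{\mathcal{A}}$ recognising exactly the universally accepting words. $\mathcal{B}_{\mathcal{A}}$ is the nondeterministic automaton over $\Sigma$ with the states, initial state and acceptance condition of $\mathcal{B}$ that, on reading a letter $a$ in state $p$, nondeterministically guesses a box $\beta\in\mathrm{Boxes}_{\mathcal{A},a}$ and moves to $\delta_{\mathcal{B}}(p,\beta)$; runs of $\mathcal{B}_{\mathcal{A}}$ on $w=w_0w_1\dots$ correspond to sequences of boxes $\beta_i\in\mathrm{Boxes}_{\mathcal{A},w_i}$, and such a run is accepting iff $\mathcal{B}$ accepts $\beta_0\beta_1\dots$. $\mathcal{B}_{\mathcal{A}}$ is GFG iff Eve wins the game in which, each round, Adam picks a letter $a$ and Eve picks a box in $\mathrm{Boxes}_{\mathcal{A},a}$, Eve winning iff the generated word is not in $L(\mathcal{B}_{\mathcal{A}})$ or the generated run is accepting. *)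

(* Defs.v *)
From mathcomp Require Export all_boot.
Set Implicit Arguments. Unset Strict Implicit. Unset Printing Implicit Defensive.

Inductive pbf (Q : Type) : Type :=
| PAtom of Q
| PAnd of pbf Q & pbf Q
| POr of pbf Q & pbf Q.

Record APA (Sigma Q : finType) := {
  a_init : Q;
  a_delta : Q -> Sigma -> pbf Q;
  a_prio : Q -> Sigma -> Q -> nat }.

(* [reach f ch pre p q']: descending formula [f] (which sits at position [pre]
   in the enclosing formula) along the path [p] (false = left, true = right)
   ends in atom [q'], where at disjunction nodes the direction is the one
   chosen by [ch] (applied to the position of the node) and at conjunctions
   any direction may be taken. *)
Fixpoint reach (Q : Type) (f : pbf Q) (ch : seq bool -> bool)
    (pre p : seq bool) (q' : Q) {struct f} : Prop :=
  match f, p with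
  | PAtom q, [::] => q = q'
  | PAnd f1 f2, b :: p' => reach (if b then f2 else f1) ch (rcons pre b) p' q'
  | POr f1 f2, b :: p' =>
      b = ch pre /\ reach (if b then f2 else f1) ch (rcons pre b) p' q'
  | _, _ => False
  end.

Definition parity_acc (c : nat -> nat) : Prop :=
  exists n, ~~ odd n /\ (forall m, exists2 k, m <= k & c k = n) /\
            (exists m, forall k, m <= k -> c k <= n).

Section Defs.
Variables (Sigma Q : finType) (A : APA Sigma Q).

(* Model-checking game on w: Eve's strategy sees the history of rounds
   (state, path taken in the formula), the current state and the position of
   the current disjunction node. *)
Definition mc_play (w : nat -> Sigma)
    (tau : seq (Q * seq bool) -> Q -> seq bool -> bool)
    (q : nat -> Q) (p : nat -> seq bool) : Prop :=
  q 0 = a_init A /\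
  forall i, reach (a_delta A (q i) (w i))
                  (tau [seq (q j, p j) | j <- iota 0 i] (q i)) [::] (p i) (q i.+1).

Definition inL (w : nat -> Sigma) : Prop :=
  exists tau, forall q p, mc_play w tau q p ->
    parity_acc (fun i => a_prio A (q i) (w i) (q i.+1)).

Definition letter_play
    (sg : seq (Q * Sigma * seq bool) -> Q -> Sigma -> seq bool -> bool)
    (w : nat -> Sigma) (q : nat -> Q) (p : nat -> seq bool) : Prop :=
  q 0 = a_init A /\
  forall i, reach (a_delta A (q i) (w i))
                  (sg [seq (q j, w j, p j) | j <- iota 0 i] (q i) (w i))
                  [::] (p i) (q i.+1).

Definition exists_GFG : Prop :=
  exists sg, forall w q p, letter_play sg w q p ->
    ~ inL w \/ parity_acc (fun i => a_prio A (q i) (w i) (q i.+1)).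

(* b is the box beta(A, a, sigma) for some local strategy sigma,
   i.e. b belongs to Boxes_{A,a}. *)
Definition boxOf (a : Sigma) (b : {set Q * Sigma * Q}) : Prop :=
  exists sigma : Q -> seq bool -> bool,
    forall t : Q * Sigma * Q, t \in b <->
      (t.1.2 = a /\ exists p, reach (a_delta A t.1.1 a) (sigma t.1.1) [::] p t.2).

Definition BoxT := {b : {set Q * Sigma * Q} | exists a, boxOf a b}.

Definition univ_acc (beta : nat -> BoxT) : Prop :=
  forall (q : nat -> Q) (a : nat -> Sigma), q 0 = a_init A ->
    (forall i, (q i, a i, q i.+1) \in proj1_sig (beta i)) ->
    parity_acc (fun i => a_prio A (q i) (a i) (q i.+1)).
End Defs.

Fixpoint drun (P L : Type) (p0 : P) (d : P -> L -> P) (w : nat -> L) (i : nat) : P :=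
  match i with 0 => p0 | i'.+1 => d (drun p0 d w i') (w i') end.

Definition dpa_acc (P L : Type) (p0 : P) (d : P -> L -> P) (c : P -> L -> nat)
    (w : nat -> L) : Prop :=
  parity_acc (fun i => c (drun p0 d w i) (w i)).

Section BA.
Variables (Sigma Q : finType) (A : APA Sigma Q) (P : finType)
  (p0 : P) (dB : P -> BoxT A -> P) (cB : P -> BoxT A -> nat).

Definition BA_lang (w : nat -> Sigma) : Prop :=
  exists beta : nat -> BoxT A,
    (forall i, boxOf A (w i) (proj1_sig (beta i))) /\ dpa_acc p0 dB cB beta.

Definition BA_GFG : Prop :=
  exists s : seq Sigma -> Sigma -> BoxT A,
    (forall h a, boxOf A a (proj1_sig (s h a))) /\
    forall w : nat -> Sigma, BA_lang w ->
      dpa_acc p0 dB cB (fun i => s [seq w j | j <- iota 0 i] (w i)).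
End BA.

(* Main.v *)
Require Import Defs.
From mathcomp Require Import all_boot boolp zify.
Set Implicit Arguments. Unset Strict Implicit. Unset Printing Implicit Defensive.

Lemma wo (P : nat -> Prop) : (exists n, P n) -> exists n, P n /\ forall m, P m -> n <= m.
Proof.
move=> ex.
have ex' : exists n, `[< P n >] by case: ex => n Pn; exists n; apply/asboolP.
exists (ex_minn ex'); case: ex_minnP => n /asboolP Pn H; split => // m Pm.
by apply: H; apply/asboolP.
Qed.

Lemma parity_tail (c c' : nat -> nat) N :
  (forall j, N <= j -> c j = c' j) -> parity_acc c -> parity_acc c'.
Proof.
move=> E [n [ev [inf [m0 ev2]]]]; exists n; split=> //; split.
  move=> m; case: (inf (maxn m N)) => k hk ck; exists k; first lia.
  by rewrite -E //; lia.
exists (maxn m0 N) => k hk; rewrite -E; last lia.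
by apply: ev2; lia.
Qed.

Lemma parity_top_even (c : nat -> nat) d : ~~ odd d -> (forall j, c j <= d) ->
  (forall N, exists2 k, N <= k & c k = d) -> parity_acc c.
Proof.
move=> ev le inf; exists d; split=> //; split=> //.
by exists 0 => k _.
Qed.

Lemma parity_top_odd (c : nat -> nat) d : odd d -> (forall j, c j <= d) ->
  (forall N, exists2 k, N <= k & c k = d) -> ~ parity_acc c.
Proof.
move=> od le inf [n [ev [inf2 [m0 ev2]]]].
case: (inf m0) => k hk ck.
have h1 := ev2 k hk; rewrite ck in h1.
case: (inf2 0) => k' _ ck'.
have h2 := le k'; rewrite ck' in h2.
have : n = d by lia.
by move=> E; rewrite E od in ev.
Qed.

Section Game.
Variables (Q : finType) (M Opt : Type) (move : nat -> Q -> Opt -> M -> Q -> Prop).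
Hypothesis move_ex : forall i x o, exists m y, move i x o m y.

Definition step i x o y := exists m, move i x o m y.
Definition cons (s : nat -> Q -> Opt) i0 (q : nat -> Q) :=
  forall k, i0 <= k -> step k (q k) (s k (q k)) (q k.+1).
Definition hist (q : nat -> Q) (m : nat -> M) i0 k :=
  [seq (q j, m j) | j <- iota i0 (k - i0)].
Definition hcons (tau : seq (Q * M) -> Q -> Opt) i0 q m :=
  forall k, i0 <= k -> move k (q k) (tau (hist q m i0 k) (q k)) (m k) (q k.+1).

Section Cond.
Variables (G B : nat -> Q -> Q -> Prop) (prio : nat -> Q -> Q -> nat).
Definition cond i0 (q : nat -> Q) :=
  (exists k, [/\ i0 <= k, G k (q k) (q k.+1) &
      forall j, i0 <= j < k -> ~ B j (q j) (q j.+1)])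
  \/ ((forall j, i0 <= j -> ~ B j (q j) (q j.+1)) /\
      parity_acc (fun j => prio j (q j) (q j.+1))).
Definition PosWin s i0 x := forall q, q i0 = x -> cons s i0 q -> cond i0 q.
Definition PW i0 x := exists s, PosWin s i0 x.
Definition HWin tau i0 x := forall q m, q i0 = x -> hcons tau i0 q m -> cond i0 q.
Definition HW i0 x := exists tau, HWin tau i0 x.

Lemma cond_ext i0 q q' : (forall j, i0 <= j -> q j = q' j) -> cond i0 q -> cond i0 q'.
Proof.
move=> E.
have E2 j : i0 <= j -> q j = q' j /\ q j.+1 = q' j.+1 by move=> h; split; apply: E; lia.
move=> [[k [hk hG hB]]|[hB hp]].
  left; exists k; split=> //; first by have [<- <-] := E2 k hk.
  by move=> j hj; have [<- <-] := E2 j ltac:(lia); apply: hB.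
right; split.
  by move=> j hj; have [<- <-] := E2 j hj; apply: hB.
by apply: parity_tail hp => j hj /=; have [<- <-] := E2 j hj.
Qed.

Lemma cond_suffix i0 k q : i0 <= k ->
  (forall j, i0 <= j < k -> ~ G j (q j) (q j.+1) /\ ~ B j (q j) (q j.+1)) ->
  cond i0 q -> cond k q.
Proof.
move=> hk hGB [[l [hl hG hB]]|[hB hp]].
  case: (ltnP l k) => hlk.
    by have [] := hGB l; first lia.
  left; exists l; split=> // j hj; apply: hB; lia.
right; split=> // j hj; apply: hB; lia.
Qed.

Lemma cond_prefix i0 k q : i0 <= k ->
  (forall j, i0 <= j < k -> ~ B j (q j) (q j.+1)) ->
  cond k q -> cond i0 q.
Proof.
move=> hk hB0 [[l [hl hG hB]]|[hB hp]].
  left; exists l; split=> //; first lia.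
  move=> j hj; case: (ltnP j k) => hjk; first by apply: hB0; lia.
  by apply: hB; lia.
right; split=> // j hj; case: (ltnP j k) => hjk; first by apply: hB0; lia.
by apply: hB; lia.
Qed.
End Cond.

Lemma nx_ex : {nx : nat * Q * Opt -> M * Q &
  forall t, move t.1.1 t.1.2 t.2 (nx t).1 (nx t).2}.
Proof.
have H : forall t : nat * Q * Opt, exists p : M * Q, move t.1.1 t.1.2 t.2 p.1 p.2.
  by move=> t; have [m [y h]] := move_ex t.1.1 t.1.2 t.2; exists (m, y).
exact: (choice H).
Qed.

Lemma play_ex s i0 x : exists q, q i0 = x /\ cons s i0 q.
Proof.
have [nx Hnx] := nx_ex.
pose g := fix g n := if n is n'.+1 then (nx (i0 + n', g n', s (i0 + n') (g n'))).2 else x.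
exists (fun j => g (j - i0)); split; first by rewrite subnn.
move=> k hk; have [n ->] : exists n, k = i0 + n by exists (k - i0); lia.
rewrite /step addKn -addnS addKn /=.
set t := (i0 + n, g n, s (i0 + n) (g n)).
by exists (nx t).1; exact: (Hnx t).
Qed.

Lemma hplay_ex tau i0 x : exists q m, q i0 = x /\ hcons tau i0 q m.
Proof.
have [nx Hnx] := nx_ex.
pose g := fix g n := if n is n'.+1 then
   let hy := g n' in let p := nx (i0 + n', hy.2, tau hy.1 hy.2) in (rcons hy.1 (hy.2, p.1), p.2)
   else ([::], x).
pose q j := (g (j - i0)).2.
pose m j := (nx (j, q j, tau (g (j - i0)).1 (q j))).1.
have Hh n : hist q m i0 (i0 + n) = (g n).1.
  elim: n => [|n IH]; first by rewrite /hist addn0 subnn.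
  rewrite /hist addKn -addn1 iotaD map_cat /=.
  move: IH; rewrite /hist addKn => ->.
  by rewrite addn1 /= /q /m addKn cats1 /q addKn.
exists q, m; split; first by rewrite /q subnn.
move=> k hk; have [n ->] : exists n, k = i0 + n by exists (k - i0); lia.
rewrite Hh /q /m addKn -addnS addKn /=.
rewrite /q addKn.
set t := (i0 + n, (g n).2, tau (g n).1 (g n).2).
exact: (Hnx t).
Qed.

Definition sp T k (q r : nat -> T) := fun j => if j < k then q j else r j.

Lemma cons_splice s i0 k q r : i0 <= k ->
  (forall j, i0 <= j < k -> step j (q j) (s j (q j)) (q j.+1)) ->
  r k = q k -> cons s k r -> cons s i0 (sp k q r).
Proof.
move=> hk hq e hr j hj; rewrite /sp.
case: (ltnP j k) => hjk.
  case: (ltnP j.+1 k) => hjk'; first by apply: hq; lia.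
  have ek : j.+1 = k by lia.
  by rewrite ek e -{1}ek; apply: hq; lia.
have -> : j.+1 < k = false by lia.
by apply: hr.
Qed.

Lemma hist_eq q m q' m' i0 j :
  (forall l, i0 <= l < j -> q l = q' l /\ m l = m' l) -> hist q m i0 j = hist q' m' i0 j.
Proof.
move=> h; apply/eq_in_map => l; rewrite mem_iota => hl.
by have [-> ->] := h l ltac:(lia).
Qed.

Lemma hist_cat q m i0 k j : i0 <= k <= j ->
  hist q m i0 j = hist q m i0 k ++ hist q m k j.
Proof.
move=> h; rewrite /hist -map_cat.
have -> : j - i0 = (k - i0) + (j - k) by lia.
by rewrite iotaD; congr (map _ (_ ++ iota _ _)); lia.
Qed.

Lemma hcons_splice tau i0 k q m r m' : i0 <= k ->
  (forall j, i0 <= j < k -> move j (q j) (tau (hist q m i0 j) (q j)) (m j) (q j.+1)) ->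
  r k = q k -> hcons (fun h => tau (hist q m i0 k ++ h)) k r m' ->
  hcons tau i0 (sp k q r) (sp k m m').
Proof.
move=> hk hq e hr j hj; rewrite /sp.
case: (ltnP j k) => hjk.
  have -> : hist (sp k q r) (sp k m m') i0 j = hist q m i0 j.
    by apply: hist_eq => l hl; rewrite /sp; have -> : l < k by lia.
  case: (ltnP j.+1 k) => hjk'; first by apply: hq; lia.
  have ek : j.+1 = k by lia.
  by rewrite ek e -{1}ek; apply: hq; lia.
rewrite (@hist_cat _ _ i0 k j); last by lia.
have -> : hist (sp k q r) (sp k m m') i0 k = hist q m i0 k.
  by apply: hist_eq => l hl; rewrite /sp; have -> : l < k by lia.
have -> : hist (sp k q r) (sp k m m') k j = hist r m' k j.
  by apply: hist_eq => l hl; rewrite /sp; have -> : l < k = false by lia.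
have -> : j.+1 < k = false by lia.
by apply: hr.
Qed.

Section HistLemmas.
Variables (G B : nat -> Q -> Q -> Prop) (prio : nat -> Q -> Q -> nat).
Local Notation cond := (cond G B prio).
Local Notation HWin := (HWin G B prio).
Local Notation HW := (HW G B prio).

Definition pcons tau i0 k q m :=
  forall j, i0 <= j < k -> move j (q j) (tau (hist q m i0 j) (q j)) (m j) (q j.+1).

Lemma hres tau i0 q m k : HWin tau i0 (q i0) -> i0 <= k -> pcons tau i0 k q m ->
  (forall j, i0 <= j < k -> ~ G j (q j) (q j.+1) /\ ~ B j (q j) (q j.+1)) ->
  HWin (fun h => tau (hist q m i0 k ++ h)) k (q k).
Proof.
move=> hw hk hp hGB r m' er hr.
have hs := hcons_splice hk hp er hr.
have c0 : cond i0 (sp k q r).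
  apply: hw hs; rewrite /sp; case: ltnP => // h.
  by have -> : i0 = k by lia.
have c1 : cond k (sp k q r).
  apply: cond_suffix c0 => // j hj; rewrite /sp.
  have -> : j < k by lia.
  case: ltnP => h; first by apply: hGB; lia.
  have ek : j.+1 = k by lia.
  by have := hGB j ltac:(lia); rewrite ek er.
apply: cond_ext c1 => j hj; rewrite /sp.
by have -> : j < k = false by lia.
Qed.

Lemma hext tau i0 q m k : i0 <= k -> pcons tau i0 k q m ->
  exists r m', [/\ hcons tau i0 r m', forall j, j <= k -> r j = q j &
                   forall j, j < k -> m' j = m j].
Proof.
move=> hk hp.
have [r [m' [er hr]]] := hplay_ex (fun h => tau (hist q m i0 k ++ h)) k (q k).
exists (sp k q r), (sp k m m'); split.
- exact: hcons_splice hk hp er hr.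
- move=> j hj; rewrite /sp; case: ltnP => // h.
  by have -> : j = k by lia.
- by move=> j hj; rewrite /sp hj.
Qed.

Lemma hist_step tau i x m0 y : HWin tau i x -> move i x (tau [::] x) m0 y ->
  G i x y \/ (~ B i x y /\ HW i.+1 y).
Proof.
move=> hw hm.
pose q j := if j <= i then x else y.
pose m (j : nat) := m0.
have hp : pcons tau i i.+1 q m.
  move=> j hj; have ej : j = i by lia.
  rewrite ej /q leqnn ltnn /hist subnn /=.
  exact: hm.
have qi : q i = x by rewrite /q leqnn.
have qi1 : q i.+1 = y by rewrite /q ltnn.
case: (EM (G i x y)) => hG; first by left.
case: (EM (B i x y)) => hB.
  exfalso.
  have [r [m' [hr er _]]] := hext (leqnSn i) hp.
  have e1 : r i = x by rewrite er // qi.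
  have e2 : r i.+1 = y by rewrite er // qi1.
  have := hw r m' e1 hr.
  move=> [[l [hl hGl hBl]]|[hBn _]].
    case: (ltnP i l) => h.
      by apply: (hBl i); [lia| rewrite e1 e2].
    have el : l = i by lia.
    by move: hGl; rewrite el e1 e2.
  by apply: (hBn i) => //; rewrite e1 e2.
right; split => //.
exists (fun h => tau (hist q m i i.+1 ++ h)); rewrite -qi1.
apply: hres => //; first by rewrite qi.
move=> j hj; have ej : j = i by lia.
by rewrite ej qi qi1.
Qed.

End HistLemmas.

Section Union.
Variables (o0 : Opt) (G B : nat -> Q -> Q -> Prop) (prio : nat -> Q -> Q -> nat).
Local Notation cond := (cond G B prio).
Local Notation PosWin := (PosWin G B prio).
Local Notation PW := (PW G B prio).

Lemma cond_sp i0 k q r : i0 <= k -> r k = q k ->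
  (forall j, i0 <= j < k -> ~ G j (q j) (q j.+1) /\ ~ B j (q j) (q j.+1)) ->
  cond i0 (sp k q r) -> cond k r.
Proof.
move=> hk er hGB c0.
have c1 : cond k (sp k q r).
  apply: cond_suffix c0 => // j hj; rewrite /sp.
  have -> : j < k by lia.
  case: ltnP => h; first by apply: hGB; lia.
  have ek : j.+1 = k by lia.
  by have := hGB j ltac:(lia); rewrite ek er.
apply: cond_ext c1 => j hj; rewrite /sp.
by have -> : j < k = false by lia.
Qed.

Lemma sp_start T i0 k (q r : nat -> T) : i0 <= k -> r k = q k -> sp k q r i0 = q i0.
Proof. by move=> hk er; rewrite /sp; case: ltnP => // h; have -> : i0 = k by lia. Qed.

Definition onestep ss := forall k y y', PW k y -> step k y (ss k y) y' ->
  G k y y' \/ (~ B k y y' /\ PW k.+1 y').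
Definition uwin ss := forall i0 q, PW i0 (q i0) ->
  (forall k, i0 <= k -> PW k (q k) -> step k (q k) (ss k (q k)) (q k.+1)) -> cond i0 q.

Lemma union : exists ss, onestep ss /\ uwin ss.
Proof.
have [sg Hsg] : {sg : nat * Q -> nat -> Q -> Opt &
    forall u, PW u.1 u.2 -> PosWin (sg u) u.1 u.2}.
  have H : forall u : nat * Q, exists sg : nat -> Q -> Opt, PW u.1 u.2 -> PosWin sg u.1 u.2.
    move=> u; case: (EM (PW u.1 u.2)) => [[s hs]|hn].
      by exists s.
    by exists (fun _ _ => o0) => h; case: hn.
  exact: (choice H).
pose Dom (u : nat * Q) k y := PW u.1 u.2 /\ exists q, [/\ q u.1 = u.2, cons (sg u) u.1 q,
   u.1 <= k, q k = y & forall j, u.1 <= j < k -> ~ G j (q j) (q j.+1) /\ ~ B j (q j) (q j.+1)].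
have Dom_win u k y : Dom u k y -> PosWin (sg u) k y.
  move=> [hpw [q [e0 hc hk ek hGB]]] r er hr.
  have er' : r k = q k by rewrite er ek.
  apply: (cond_sp hk er' hGB); apply: (Hsg u hpw).
    by rewrite sp_start.
  by apply: cons_splice hk _ er' hr => j hj; apply: hc; lia.
have Dom_next u k y y' : Dom u k y -> step k y (sg u k y) y' ->
    exists q', [/\ q' u.1 = u.2, cons (sg u) u.1 q', u.1 <= k, q' k = y /\ q' k.+1 = y' &
      forall j, u.1 <= j < k -> ~ G j (q' j) (q' j.+1) /\ ~ B j (q' j) (q' j.+1)].
  move=> [hpw [q [e0 hc hk ek hGB]]] hs.
  have [r [er hr]] := play_ex (sg u) k.+1 y'.
  pose q0 j := if j <= k then q j else y'.
  have er' : r k.+1 = q0 k.+1 by rewrite /q0 ltnn.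
  have hc' : cons (sg u) u.1 (sp k.+1 q0 r).
    apply: cons_splice er' hr; first lia.
    move=> j hj; rewrite /q0.
    case: (ltnP j k) => h.
      by (have -> : j <= k by lia); apply: hc; lia.
    have ej : j = k by lia.
    by rewrite ej leqnn ek.
  exists (sp k.+1 q0 r); split => //.
  - by rewrite sp_start //; [rewrite /q0; have -> : u.1 <= k by []|lia].
  - by rewrite /sp /q0 ltnSn leqnn ltnn.
  - move=> j hj; rewrite /sp /q0.
    have -> : j < k.+1 by lia.
    have -> : j.+1 < k.+1 by lia.
    have -> : j <= k by lia.
    have -> : j.+1 <= k by lia.
    by apply: hGB.
have Dom_B u k y y' : Dom u k y -> step k y (sg u k y) y' -> ~ G k y y' -> ~ B k y y'.
  move=> hd hs hG hB.
  have [q' [e0 hc hk [ek ek1] _]] := Dom_next u k y y' hd hs.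
  have := Dom_win u k y hd q' ek (fun j hj => hc j ltac:(lia)).
  move=> [[l [hl hGl hBl]]|[hBn _]].
    case: (ltnP k l) => h.
      by apply: (hBl k); [lia| rewrite ek ek1].
    have el : l = k by lia.
    by move: hGl; rewrite el ek ek1.
  by apply: (hBn k) => //; rewrite ek ek1.
have Dom_step u k y y' : Dom u k y -> step k y (sg u k y) y' -> ~ G k y y' -> ~ B k y y' ->
    Dom u k.+1 y'.
  move=> hd hs hG hB.
  have [q' [e0 hc hk [ek ek1] hGB]] := Dom_next u k y y' hd hs.
  split; first by case: hd.
  exists q'; split => //; first lia.
  move=> j hj; case: (ltnP j k) => h; first by apply: hGB; lia.
  by (have -> : j = k by lia); rewrite ek ek1.
have PW_Dom k y : PW k y -> Dom (k, y) k y.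
  move=> hpw; split => //.
  have [q [e0 hc]] := play_ex (sg (k, y)) k y.
  by exists q; split => //= j /= hj; exfalso; lia.
have Dom_PW u k y : Dom u k y -> PW k y by move=> hd; exists (sg u); apply: Dom_win.
have [f Hf] : {f : nat * Q -> nat * (nat * Q) & forall v, PW v.1 v.2 ->
    [/\ unpickle (f v).1 = Some (f v).2, Dom (f v).2 v.1 v.2 &
       forall n u, unpickle n = Some u -> Dom u v.1 v.2 -> (f v).1 <= n]}.
  have H : forall v : nat * Q, exists fv : nat * (nat * Q), PW v.1 v.2 ->
    [/\ unpickle fv.1 = Some fv.2, Dom fv.2 v.1 v.2 &
       forall n u, unpickle n = Some u -> Dom u v.1 v.2 -> fv.1 <= n].
  2: exact: (choice H).
  move=> [k y] /=; case: (EM (PW k y)) => hpw; last by exists (0, (k, y)).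
  have [n [[u [eu hu]] hmin]] := wo (P := fun n => exists u, unpickle n = Some u /\ Dom u k y)
    (ex_intro _ (pickle (k, y)) (ex_intro _ (k, y) (conj (pickleK (k, y)) (PW_Dom _ _ hpw)))).
  exists (n, u) => _; split => // n' u' e' d'.
  by apply: hmin; exists u'.
exists (fun k y => sg (f (k, y)).2 k y); split.
  move=> k y y' hpw hs.
  have [_ hd _] := Hf (k, y) hpw.
  case: (EM (G k y y')) => hG; first by left.
  have hB := Dom_B _ _ _ _ hd hs hG.
  right; split => //.
  exact: Dom_PW (Dom_step _ _ _ _ hd hs hG hB).
move=> i0 q hpw0 hstep.
case: (EM (exists k, [/\ i0 <= k, G k (q k) (q k.+1) &
    forall j, i0 <= j < k -> ~ B j (q j) (q j.+1)])) => [h|NG]; first by left.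
have inv n : [/\ PW (i0 + n) (q (i0 + n)), ~ G (i0 + n) (q (i0 + n)) (q (i0 + n).+1) &
    forall j, i0 <= j < i0 + n -> ~ B j (q j) (q j.+1)].
  elim: n => [|n [hp hg hb]].
    rewrite addn0; split => //; last by move=> j hj; exfalso; lia.
    move=> hG; apply: NG; exists i0; split => // j hj; exfalso; lia.
  have hs := hstep (i0 + n) (leq_addr _ _) hp.
  have [_ hd _] := Hf (i0 + n, q (i0 + n)) hp.
  have hB := Dom_B _ _ _ _ hd hs hg.
  have hb' : forall j, i0 <= j < i0 + n.+1 -> ~ B j (q j) (q j.+1).
    move=> j hj; case: (ltnP j (i0 + n)) => h; first by apply: hb; lia.
    by (have -> : j = i0 + n by lia); exact: hB.
  split => //; first by rewrite addnS; exact: Dom_PW (Dom_step _ _ _ _ hd hs hg hB).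
  move=> hG; apply: NG; exists (i0 + n.+1); split => //; lia.
pose a n := (f (i0 + n, q (i0 + n))).1.
pose ua n := (f (i0 + n, q (i0 + n))).2.
have Ha n : unpickle (a n) = Some (ua n) /\ Dom (ua n) (i0 + n) (q (i0 + n)).
  by have [hp _ _] := inv n; have [e d _] := Hf (i0 + n, q (i0 + n)) hp.
have mono n : a n.+1 <= a n.
  have [hp hg _] := inv n; have [hp1 _ _] := inv n.+1.
  have [e d] := Ha n.
  have hs := hstep (i0 + n) (leq_addr _ _) hp.
  have hB := Dom_B _ _ _ _ d hs hg.
  have d1 := Dom_step _ _ _ _ d hs hg hB.
  have [_ _ hmin] := Hf (i0 + n.+1, q (i0 + n.+1)) hp1.
  by apply: hmin e _; rewrite addnS.
have [v [[N eN] vmin]] := wo (P := fun v => exists n, a n = v) (ex_intro _ (a 0) (ex_intro _ 0 erefl)).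
have mono' n : a (N + n) <= a N.
  elim: n => [|n IH]; first by rewrite addn0.
  by rewrite addnS; exact: leq_trans (mono _) IH.
have cst n : N <= n -> ua n = ua N.
  move=> hn; have [n' ->] : exists n', n = N + n' by exists (n - N); lia.
  have e : a (N + n') = a N.
    by apply/eqP; rewrite eqn_leq mono' /= eN; apply: vmin; exists (N + n').
  have [e1 _] := Ha (N + n'); have [e2 _] := Ha N.
  by move: e1; rewrite e e2 => -[].
have [_ dN] := Ha N.
have nB j : i0 <= j -> ~ B j (q j) (q j.+1).
  by move=> hj; have [_ _ hb] := inv (j.+1 - i0); apply: hb; lia.
apply: (cond_prefix (k := i0 + N)); first exact: leq_addr.
  by move=> j hj; apply: nB; lia.
apply: (Dom_win _ _ _ dN) => // k hk.
have [n ek] : exists n, k = i0 + n by exists (k - i0); lia.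
have [hp _ _] := inv n.
have := hstep k ltac:(lia); rewrite ek => /(_ hp).
by rewrite -/(ua n) cst //; lia.
Qed.

End Union.

Fixpoint Attr (Tg B : nat -> Q -> Q -> Prop) n i y : Prop :=
  if n is n'.+1 then exists o, forall y', step i y o y' ->
     Tg i y y' \/ (~ B i y y' /\ Attr Tg B n' i.+1 y')
  else False.

Lemma hcons_pcons tau i0 q m k : hcons tau i0 q m -> pcons tau i0 k q m.
Proof. by move=> h j hj; apply: h; lia. Qed.

Section Main.
Variable o0 : Opt.

Definition Theta d := forall G B prio, (forall i x y, prio i x y <= d) ->
  forall i0 x, HW G B prio i0 x -> PW G B prio i0 x.

Lemma even_case d : ~~ odd d -> (0 < d -> Theta d.-1) -> Theta d.
Proof.
move=> ev IH G B prio hle i0 x hw.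
pose W i y := HW G B prio i y.
pose Tg i y y' := G i y y' \/ (~ B i y y' /\ prio i y y' = d /\ W i.+1 y').
pose E i y := exists n, Attr Tg B n i y.
pose GY i y y' := Tg i y y' \/ (~ B i y y' /\ E i.+1 y').
pose prY i y y' := if prio i y y' == d then 0 else prio i y y'.
have WY : forall i y, W i y -> PW GY B prY i y.
  case: (posnP d) => [d0|dpos].
    have [tw Htw] : {tw : nat * Q -> seq (Q * M) -> Q -> Opt &
        forall v, W v.1 v.2 -> HWin G B prio (tw v) v.1 v.2}.
      have H : forall v : nat * Q, exists t, W v.1 v.2 -> HWin G B prio t v.1 v.2.
        move=> v; case: (EM (W v.1 v.2)) => [[t ht]|hn]; first by exists t.
        by exists (fun _ _ => o0) => h; case: hn.
      exact: (choice H).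
    move=> i y hW; exists (fun i z => tw (i, z) [::] z) => r er hr.
    have [m0 hm] := hr i (leqnn i).
    have hWr : HWin G B prio (tw (i, r i)) i (r i) by apply: (Htw (i, r i)); rewrite /= er.
    left; exists i; split => //; last by move=> j hj; exfalso; lia.
    case: (hist_step hWr hm) => [hG|[hB hW']]; first by left; left.
    left; right; split => //; split => //.
    by have := hle i (r i) (r i.+1); rewrite d0; lia.
  have IH' := IH dpos GY B prY.
  move=> i y [tau htau]; apply: IH'.
    move=> j z z'; rewrite /prY; case: eqP => // hd.
    by have := hle j z z'; lia.
  exists tau => r m er hr.
  case: (htau r m er hr) => [[l [hl hG hB]]|[hB hp]].
    by left; exists l; split => //; left; left.
  case: (EM (exists l, i <= l /\ GY l (r l) (r l.+1))) => [[l [hl hgy]]|nGY].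
    by left; exists l; split => // j hj; apply: hB; lia.
  right; split => //.
  apply: (parity_tail (N := i)) hp => j hj /=; rewrite /prY; case: eqP => // hd.
  exfalso; apply: (nGY); exists j; split => //; left; right; split; first by apply: hB.
  split => //.
  exists (fun h => tau (hist r m i j.+1 ++ h)).
  apply: hres; first by rewrite er.
  - lia.
  - exact: hcons_pcons hr.
  - move=> l hl; split; last by apply: hB; lia.
    by move=> hG; apply: (nGY); exists l; split; [lia| left; left].
have [sY [osY wsY]] := union o0 GY B prY.
have [rk Hrk] : {rk : nat * Q -> nat & forall v, E v.1 v.2 ->
    Attr Tg B (rk v) v.1 v.2 /\ forall n, Attr Tg B n v.1 v.2 -> rk v <= n}.
  have H : forall v : nat * Q, exists r, E v.1 v.2 ->
      Attr Tg B r v.1 v.2 /\ forall n, Attr Tg B n v.1 v.2 -> r <= n.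
    move=> v; case: (EM (E v.1 v.2)) => hE; last by exists 0.
    by have [r [h1 h2]] := wo hE; exists r.
  exact: (choice H).
have [oE HoE] : {oE : nat * Q -> Opt & forall v, E v.1 v.2 -> forall y',
    step v.1 v.2 (oE v) y' -> Tg v.1 v.2 y' \/ (~ B v.1 v.2 y' /\ Attr Tg B (rk v).-1 v.1.+1 y')}.
  have H : forall v : nat * Q, exists o, E v.1 v.2 -> forall y',
    step v.1 v.2 o y' -> Tg v.1 v.2 y' \/ (~ B v.1 v.2 y' /\ Attr Tg B (rk v).-1 v.1.+1 y').
    move=> v; case: (EM (E v.1 v.2)) => hE; last by exists o0.
    have [h1 _] := Hrk v hE; move: h1.
    by case: (rk v) => [|r] //= [o ho]; exists o.
  exact: (choice H).
pose sc i y := if `[< E i y >] then oE (i, y) else sY i y.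
exists sc => q eq0 hc.
case: (EM (exists k, [/\ i0 <= k, G k (q k) (q k.+1) &
    forall j, i0 <= j < k -> ~ B j (q j) (q j.+1)])) => [h|NG]; first by left.
have noG k : i0 <= k -> (forall j, i0 <= j < k -> ~ B j (q j) (q j.+1)) -> ~ G k (q k) (q k.+1).
  by move=> hk hb hG; apply: NG; exists k.
have scE k : E k (q k) -> sc k (q k) = oE (k, q k).
  by move=> hE; rewrite /sc; case: asboolP.
have scY k : ~ E k (q k) -> sc k (q k) = sY k (q k).
  by move=> hE; rewrite /sc; case: asboolP.
have inv n : [/\ E (i0 + n) (q (i0 + n)) \/ PW GY B prY (i0 + n) (q (i0 + n)),
    ~ G (i0 + n) (q (i0 + n)) (q (i0 + n).+1) &
    forall j, i0 <= j < i0 + n -> ~ B j (q j) (q j.+1)].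
  elim: n => [|n [hz hg hb]].
    rewrite addn0; split.
    - by right; rewrite eq0; apply: WY.
    - by apply: noG => // j hj; exfalso; lia.
    - by move=> j hj; exfalso; lia.
  set k := i0 + n.
  have hs := hc k (leq_addr _ _).
  have [hB hz'] : ~ B k (q k) (q k.+1) /\ (E k.+1 (q k.+1) \/ PW GY B prY k.+1 (q k.+1)).
    case: (EM (E k (q k))) => hE.
      rewrite scE // in hs.
      case: (HoE (k, q k) hE (q k.+1) hs) => [[hG|[hB [hd hW]]]|[hB hA]].
      - by case: hg.
      - by split => //; right; apply: WY.
      - by split => //; left; exists (rk (k, q k)).-1.
    case: hz => // hY.
    rewrite scY // in hs.
    case: (osY k (q k) (q k.+1) hY hs) => [[[hG|[hB [hd hW]]]|[hB hE']]|[hB hP]].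
    - by case: hg.
    - by split => //; right; apply: WY.
    - by split => //; left.
    - by split => //; right.
  have hb' : forall j, i0 <= j < i0 + n.+1 -> ~ B j (q j) (q j.+1).
    move=> j hj; case: (ltnP j k) => h; first by apply: hb; lia.
    by (have -> : j = k by rewrite /k; lia); exact: hB.
  rewrite addnS; split => //.
    by apply: noG => //; [lia| rewrite -addnS].
  by rewrite -addnS.
have nB j : i0 <= j -> ~ B j (q j) (q j.+1).
  by move=> hj; have [_ _ hb] := inv (j.+1 - i0); apply: hb; lia.
have nG j : i0 <= j -> ~ G j (q j) (q j.+1).
  by move=> hj; have [_ hg _] := inv (j - i0); move: hg; rewrite subnKC.
right; split => //.
case: (EM (forall N, exists2 k, N <= k & prio k (q k) (q k.+1) = d)) => [hinf|hfin].
  exact: parity_top_even ev (fun j => hle _ _ _) hinf.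
have [N hN] : exists N, forall k, N <= k -> prio k (q k) (q k.+1) <> d.
  case: (EM (exists N, forall k, N <= k -> prio k (q k) (q k.+1) <> d)) => // hn.
  exfalso; apply: hfin => N.
  case: (EM (exists2 k, N <= k & prio k (q k) (q k.+1) = d)) => // hk.
  by exfalso; apply: hn; exists N => k hk' hd; apply: hk; exists k.
pose N' := maxn N i0.
have noE : forall n m k, m <= n -> N' <= k -> Attr Tg B m k (q k) -> False.
  elim => [|n IHn] m k hm hk hA.
    by move: hA; (have -> : m = 0 by lia).
  have hE : E k (q k) by exists m.
  have hs := hc k ltac:(lia); rewrite scE // in hs.
  have [hr1 hr2] := Hrk (k, q k) hE.
  have rpos : 0 < rk (k, q k) by move: hr1; case: (rk (k, q k)).
  have rle := hr2 m hA.
  case: (HoE (k, q k) hE (q k.+1) hs) => [[hG|[hB [hd hW]]]|[hB hA']].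
  - by apply: (nG k) => //; lia.
  - by apply: (hN k) => //; lia.
  - by apply: (IHn _ k.+1 _ _ hA'); lia.
have PY k : N' <= k -> PW GY B prY k (q k).
  move=> hk; have [hz _ _] := inv (k - i0); move: hz; rewrite subnKC; last lia.
  by case => // hE; exfalso; case: hE => n; exact: (noE n n k (leqnn n) hk).
have hcY : forall k, N' <= k -> PW GY B prY k (q k) -> step k (q k) (sY k (q k)) (q k.+1).
  move=> k hk _; rewrite -scY; first by apply: hc; lia.
  by case => n; exact: (noE n n k (leqnn n) hk).
have cY := wsY N' q (PY N' (leqnn _)) hcY.
case: cY => [[l [hl hGY _]]|[_ hpY]].
  case: hGY => [[hG|[_ [hd _]]]|[_ [n hA]]].
  - by exfalso; apply: (nG l _ hG); move: hl; rewrite /N'; lia.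
  - by exfalso; apply: (hN l _ hd); move: hl; rewrite /N'; lia.
  - by exfalso; apply: (noE n n l.+1 (leqnn n) _ hA); move: hl; rewrite /N'; lia.
apply: (parity_tail (N := N')) hpY => j hj /=; rewrite /prY.
by case: eqP => // hd; case: (hN j _ hd); move: hj; rewrite /N'; lia.
Qed.

Lemma odd_case d : odd d -> Theta d.-1 -> Theta d.
Proof.
move=> od IH G B prio hle i0 v0 hw.
have [ss [os ws]] := union o0 G B prio.
pose U := PW G B prio.
case: (EM (U i0 v0)) => // hC; exfalso.
have [tau htau] := hw.
pose Cst j (q : nat -> Q) := [/\ ~ G j (q j) (q j.+1), ~ B j (q j) (q j.+1) & ~ U j.+1 (q j.+1)].
pose Ch (t : (nat -> Q) * (nat -> M) * nat) := [/\ hcons tau i0 t.1.1 t.1.2, t.1.1 i0 = v0,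
   i0 <= t.2, ~ U t.2 (t.1.1 t.2) & forall j, i0 <= j < t.2 -> Cst j t.1.1].
pose Ext (t t' : (nat -> Q) * (nat -> M) * nat) := [/\ t.2 < t'.2,
   (forall j, j <= t.2 -> t'.1.1 j = t.1.1 j), (forall j, j < t.2 -> t'.1.2 j = t.1.2 j) &
   exists2 j, t.2 <= j < t'.2 & prio j (t'.1.1 j) (t'.1.1 j.+1) = d].
case: (EM (exists t, Ch t /\ ~ exists t', Ch t' /\ Ext t t')) => [[t [ht hnoext]]|hall].
  case: t ht hnoext => [[q m] k] ht hnoext.
  have [hq eq0 hk hUk hCq] : [/\ hcons tau i0 q m, q i0 = v0, i0 <= k, ~ U k (q k) &
     forall j, i0 <= j < k -> Cst j q] := ht.
  pose G' i y y' := G i y y' \/ (~ B i y y' /\ U i.+1 y').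
  pose B' i y y' := B i y y' \/ [/\ prio i y y' = d, ~ G i y y' & ~ U i.+1 y'].
  pose pr' i y y' := if prio i y y' == d then 0 else prio i y y'.
  have hw' : HW G' B' pr' k (q k).
    exists (fun h => tau (hist q m i0 k ++ h)) => r m' er hr.
    have hs := hcons_splice hk (hcons_pcons hq) er hr.
    set s := sp k q r in hs.
    have sR j : k <= j -> s j = r j.
      by move=> hj; rewrite /s /sp; case: ltnP => // h; lia.
    have sQ j : j <= k -> s j = q j.
      move=> hj; rewrite /s /sp; case: ltnP => // h.
      by have -> : j = k by lia.
    have cs : cond G B prio i0 s by apply: htau hs; rewrite sQ.
    have Cs_low j : i0 <= j < k -> Cst j s.
      by move=> hj; rewrite /Cst !sQ; [apply: hCq| lia | lia].
    have mkext j' : k < j' -> (forall l, k <= l < j' -> Cst l r) ->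
        (exists2 l, k <= l < j' & prio l (r l) (r l.+1) = d) -> False.
      move=> hj' hCr [l hl hd]; apply: (hnoext); exists (s, sp k m m', j'); split.
        split => //=.
        - by rewrite sQ.
        - lia.
        - have [_ _ hu] := hCr j'.-1 ltac:(lia).
          by rewrite sR; [move: hu; have -> : j'.-1.+1 = j' by lia | lia].
        - move=> l' hl'; case: (ltnP l' k) => h; first by apply: Cs_low; lia.
          by rewrite /Cst !sR; [apply: hCr; lia| lia | lia].
      split => //=.
      - by move=> j hj; rewrite /sp hj.
      - by exists l => //; rewrite !sR //; lia.
    case: (EM (exists j, k <= j /\ ~ Cst j r)) => [hex|hall'].
      have [j [[hkj hnc] hmin]] := wo hex.
      have Cr l : k <= l < j -> Cst l r.
        move=> hl; case: (EM (Cst l r)) => // hn.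
        by have := hmin l (conj (proj1 (andP hl)) hn); lia.
      have noD l : k <= l < j -> prio l (r l) (r l.+1) <> d.
        move=> hl hd; apply: (mkext l.+1); first lia.
          by move=> l' hl'; apply: Cr; lia.
        by exists l => //; lia.
      have nB'r l : k <= l < j -> ~ B' l (r l) (r l.+1).
        move=> hl [hB|[hd _ _]]; last by apply: (noD l).
        by have [_ hb _] := Cr l hl.
      case: (EM (G j (r j) (r j.+1))) => hG.
        by left; exists j; split => //; left.
      case: (EM (B j (r j) (r j.+1))) => hB.
        exfalso; case: cs => [[l [hl hGl hBl]]|[hBn _]].
          case: (ltnP l j) => hlj.
            case: (ltnP l k) => hlk.
              by have [hg _ _] := Cs_low l ltac:(lia).
            have [hg _ _] := Cr l ltac:(lia).
            by apply: hg; rewrite -!sR //; lia.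
          case: (ltnP j l) => hjl.
            by apply: (hBl j); [lia| rewrite !sR //; lia].
          have ejl : l = j by lia.
          by apply: hG; rewrite -!sR -?ejl //; lia.
        by apply: (hBn j); [lia| rewrite !sR //; lia].
      have hU : U j.+1 (r j.+1).
        by case: (EM (U j.+1 (r j.+1))) => // hn; exfalso; apply: hnc; split.
      by left; exists j; split => //; right; split.
    have Cr l : k <= l -> Cst l r.
      by move=> hl; case: (EM (Cst l r)) => // hn; exfalso; apply: (hall'); exists l.
    have noD l : k <= l -> prio l (r l) (r l.+1) <> d.
      move=> hl hd; apply: (mkext l.+1); first lia.
        by move=> l' hl'; apply: Cr; lia.
      by exists l => //; lia.
    case: cs => [[l [hl hGl _]]|[hBn hp]].
      exfalso; case: (ltnP l k) => hlk.
        by have [hg _ _] := Cs_low l ltac:(lia).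
      have [hg _ _] := Cr l hlk.
      by apply: hg; rewrite -!sR //; lia.
    right; split.
      move=> j hj [hB|[hd _ _]]; last by apply: (noD j hj).
      by have [_ hb _] := Cr j hj.
    apply: (parity_tail (N := k)) hp => j hj /=.
    rewrite /pr' (sR j hj) (sR j.+1 ltac:(lia)).
    by case: eqP => // hd; case: (noD j hj).
  have hbd : forall i y y', pr' i y y' <= d.-1.
    move=> i y y'; rewrite /pr'; case: eqP => // hd.
    by have := hle i y y'; lia.
  have [s' hs'] := IH G' B' pr' hbd k (q k) hw'.
  apply: (hUk).
  pose s2 i y := if `[< U i y >] then ss i y else s' i y.
  exists s2 => p ep hp.
  have s2U j : U j (p j) -> s2 j (p j) = ss j (p j) by move=> h; rewrite /s2; case: asboolP.
  have s2N j : ~ U j (p j) -> s2 j (p j) = s' j (p j) by move=> h; rewrite /s2; case: asboolP.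
  case: (EM (exists j, k <= j /\ U j (p j))) => [hex|hnone].
    have [j0 [[hkj hU0] hmin]] := wo hex.
    have hkj' : k < j0.
      rewrite ltn_neqAle hkj andbT; apply/eqP => e.
      by apply: hUk; rewrite -ep e.
    have nU l : k <= l < j0 -> ~ U l (p l).
      by move=> hl hu; have := hmin l (conj (proj1 (andP hl)) hu); lia.
    have [r [er hr]] := play_ex s' j0 (p j0).
    have hc2 : cons s' k (sp j0 p r).
      apply: cons_splice er hr; first lia.
      by move=> l hl; rewrite -s2N; [apply: hp; lia | apply: nU].
    have c' := hs' (sp j0 p r) ltac:(by rewrite sp_start //; lia) hc2.
    have cj0 : cond G B prio j0 p.
      by apply: ws => // l hl hu; rewrite -s2U //; apply: hp; lia.
    have pE l : l < j0 -> sp j0 p r l = p l /\ sp j0 p r l.+1 = p l.+1.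
      move=> hl; rewrite /sp hl; split => //.
      case: ltnP => // h; have -> : l.+1 = j0 by lia.
      by [].
    case: c' => [[l [hl hG' hB']]|[hB' _]].
      case: (ltnP l j0) => hlj.
        have [a1 a2] := pE l hlj; rewrite a1 a2 in hG'.
        case: hG' => [hG|[hB hu]].
          left; exists l; split => // j hj hb; apply: (hB' j hj); left.
          by have [b1 b2] := pE j ltac:(lia); rewrite b1 b2.
        have el : l.+1 = j0.
          by case: (ltnP l.+1 j0) => h; [exfalso; exact: (nU l.+1 ltac:(lia) hu) | lia].
        apply: (cond_prefix (k := j0)) cj0; first lia.
        move=> j hj hb; case: (ltnP j l) => h.
          by apply: (hB' j); [lia|left; have [b1 b2] := pE j ltac:(lia); rewrite b1 b2].
        (have ej : j = l by lia); by rewrite ej in hb.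
      apply: (cond_prefix (k := j0)) cj0; first lia.
      by move=> j hj hb; apply: (hB' j); [lia|left; have [b1 b2] := pE j ltac:(lia); rewrite b1 b2].
    apply: (cond_prefix (k := j0)) cj0; first lia.
    by move=> j hj hb; apply: (hB' j); [lia|left; have [b1 b2] := pE j ltac:(lia); rewrite b1 b2].
  have nU l : k <= l -> ~ U l (p l) by move=> hl hu; apply: (hnone); exists l.
  have hcp : cons s' k p by move=> l hl; rewrite -s2N; [apply: hp | apply: nU].
  case: (hs' p ep hcp) => [[l [hl hG' hB']]|[hB' hp']].
    case: hG' => [hG|[_ hu]].
      by left; exists l; split => // j hj hb; apply: (hB' j hj); left.
    by exfalso; apply: (nU l.+1) => //; lia.
  case: (EM (exists l, k <= l /\ G l (p l) (p l.+1))) => [[l [hl hG]]|nG].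
    by left; exists l; split => // j hj hb; apply: (hB' j); [lia|left].
  right; split.
    by move=> j hj hb; apply: (hB' j hj); left.
  apply: (parity_tail (N := k)) hp' => j hj /=; rewrite /pr'; case: eqP => // hd.
  exfalso; apply: (hB' j hj); right; split => //.
    by move=> hG; apply: nG; exists j.
  by apply: nU; lia.
have hext : forall t, Ch t -> exists t', Ch t' /\ Ext t t'.
  move=> t ht; case: (EM (exists t', Ch t' /\ Ext t t')) => // hn.
  by exfalso; apply: (hall); exists t.
have [nxt Hnxt] : {nxt : (nat -> Q) * (nat -> M) * nat -> (nat -> Q) * (nat -> M) * nat &
    forall t, Ch t -> Ch (nxt t) /\ Ext t (nxt t)}.
  have H : forall t : (nat -> Q) * (nat -> M) * nat, exists t', Ch t -> Ch t' /\ Ext t t'.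
    move=> t; case: (EM (Ch t)) => h; last by exists t.
    by have [t' ht'] := hext t h; exists t'.
  exact: (choice H).
have [q0 [m0 [e0 hc0]]] := hplay_ex tau i0 v0.
have Ch0 : Ch (q0, m0, i0).
  by split => //=; [rewrite e0 | move=> j hj; exfalso; lia].
pose H n := iter n nxt (q0, m0, i0).
have ChH n : Ch (H n) by elim: n => [|n IHn] //=; have [] := Hnxt _ IHn.
have kH n : i0 + n <= (H n).2.
  elim: n => [|n IHn]; first by rewrite addn0; have [] := ChH 0.
  by have [_ [hlt _ _ _]] := Hnxt _ (ChH n); rewrite /= addnS; lia.
have agr n p : [/\ (H n).2 <= (H (n + p)).2,
    (forall j, j <= (H n).2 -> (H (n + p)).1.1 j = (H n).1.1 j) &
    (forall j, j < (H n).2 -> (H (n + p)).1.2 j = (H n).1.2 j)].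
  elim: p => [|p [h1 h2 h3]]; first by rewrite addn0.
  have [_ [hlt a1 a2 _]] := Hnxt _ (ChH (n + p)).
  rewrite addnS; split => /=.
  - lia.
  - by move=> j hj; rewrite a1 ?h2 //; lia.
  - by move=> j hj; rewrite a2 ?h3 //; lia.
pose ql j := (H j.+1).1.1 j.
pose ml j := (H j.+1).1.2 j.
have key j n : j.+1 <= n -> ql j = (H n).1.1 j /\ ml j = (H n).1.2 j.
  move=> hn; have [p ->] : exists p, n = j.+1 + p by exists (n - j.+1); lia.
  have [_ h2 h3] := agr j.+1 p; have := kH j.+1.
  by move=> hk; rewrite h2 ?h3 //; lia.
have key2 j n : j.+2 <= n -> [/\ ql j = (H n).1.1 j, ql j.+1 = (H n).1.1 j.+1 & ml j = (H n).1.2 j].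
  move=> hn; have [a1 a2] := key j n ltac:(lia); have [a3 _] := key j.+1 n hn.
  by split.
have hcl : hcons tau i0 ql ml.
  move=> k hk; have [a1 a2 a3] := key2 k k.+2 (leqnn _).
  have [hc _ _ _ _] := ChH k.+2.
  have -> : hist ql ml i0 k = hist (H k.+2).1.1 (H k.+2).1.2 i0 k.
    by apply: hist_eq => l hl; have [b1 b2] := key l k.+2 ltac:(lia).
  by rewrite a1 a2 a3; apply: hc.
have cl : cond G B prio i0 ql.
  apply: htau hcl; have [a1 _] := key i0 i0.+1 (leqnn _).
  by have [_ e _ _ _] := ChH i0.+1; rewrite a1.
have Cl j : i0 <= j -> Cst j ql.
  move=> hj; have [a1 a2 _] := key2 j j.+2 (leqnn _).
  have [_ _ _ _ hcs] := ChH j.+2; have := kH j.+2.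
  by move=> hk; rewrite /Cst a1 a2; apply: hcs; lia.
have inf : forall N, exists2 k, N <= k & prio k (ql k) (ql k.+1) = d.
  move=> N; have [_ [hlt _ _ [j hj hd]]] := Hnxt _ (ChH N).
  exists j; first by have := kH N; lia.
  have [_ b2 _] := agr N.+1 (j.+2 - N.+1).
  have [a1 a2 _] := key2 j (N.+1 + (j.+2 - N.+1)) ltac:(lia).
  by rewrite a1 a2 !b2 //=; lia.
case: cl => [[l [hl hG _]]|[_ hp]].
  by have [] := Cl l hl.
exact: (parity_top_odd od (fun j => hle _ _ _) inf hp).
Qed.

End Main.

End Game.

Lemma theta_all (Q : finType) (M Opt : Type) (move : nat -> Q -> Opt -> M -> Q -> Prop)
  (move_ex : forall i x o, exists m y, move i x o m y) (o0 : Opt) d : Theta move d.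
Proof.
elim/ltn_ind: d => d IH.
case: (boolP (odd d)) => od.
  apply: (odd_case move_ex o0 od); apply: IH.
  by move: od; case: d => //= d _; lia.
apply: (even_case move_ex o0 od) => dpos; apply: IH; lia.
Qed.

Lemma reach_ex (Q : Type) (f : pbf Q) ch pre : exists p q', reach f ch pre p q'.
Proof.
elim: f pre => [q|f1 IH1 f2 IH2|f1 IH1 f2 IH2] pre /=.
- by exists [::], q.
- by have [p [q' h]] := IH1 (rcons pre false); exists (false :: p), q'.
- case e: (ch pre).
    by have [p [q' h]] := IH2 (rcons pre true); exists (true :: p), q'.
  by have [p [q' h]] := IH1 (rcons pre false); exists (false :: p), q'.
Qed.

Theorem mainTheorem7 (Sigma Q : finType) (A : APA Sigma Q) (P : finType)
  (p0 : P) (dB : P -> BoxT A -> P) (cB : P -> BoxT A -> nat) :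
  (forall beta : nat -> BoxT A, dpa_acc p0 dB cB beta <-> univ_acc beta) ->
  BA_GFG p0 dB cB -> exists_GFG A.
Proof.
move=> Hequiv [s [hs hacc]].
have [sgm Hsgm] : {sgm : seq Sigma * Sigma -> Q -> seq bool -> bool & forall ha t,
    t \in proj1_sig (s ha.1 ha.2) <->
    (t.1.2 = ha.2 /\ exists p, reach (a_delta A t.1.1 ha.2) (sgm ha t.1.1) [::] p t.2)}.
  have H : forall ha : seq Sigma * Sigma, exists sg : Q -> seq bool -> bool, forall t,
      t \in proj1_sig (s ha.1 ha.2) <->
      (t.1.2 = ha.2 /\ exists p, reach (a_delta A t.1.1 ha.2) (sg t.1.1) [::] p t.2).
    by move=> ha; have [sg h] := hs ha.1 ha.2; exists sg.
  exact: (choice H).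
exists (fun hist x a pos => sgm ([seq e.1.2 | e <- hist], a) x pos).
move=> w q p [e0 hplay].
case: (EM (inL A w)) => hin; last by left.
right.
pose move' i x (o : seq bool -> bool) (m : seq bool) y := reach (a_delta A x (w i)) o [::] m y.
have move_ex : forall i x o, exists m y, move' i x o m y.
  by move=> i x o; apply: reach_ex.
pose F (i : nat) (x y : Q) := False.
pose prio i x y := a_prio A x (w i) y.
pose d := \max_(t : Q * Sigma * Q) a_prio A t.1.1 t.1.2 t.2.
have hle : forall i x y, prio i x y <= d.
  by move=> i x y; rewrite /prio /d; apply: (leq_bigmax_cond (x, w i, y)).
have hW : HW move' F F prio 0 (a_init A).
  have [tau htau] := hin.
  exists tau => q' m' e0' hc; right; split; first by move=> j _ [].
  apply: (htau q' m'); split => // i.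
  by have := hc i (leq0n i); rewrite /hist subn0.
have [sig hsig] := theta_all move_ex (fun _ => false) hle hW.
pose bset i := [set t : Q * Sigma * Q | `[< t.1.2 = w i /\
   exists p, reach (a_delta A t.1.1 (w i)) (sig i t.1.1) [::] p t.2 >]].
have hbox i : exists a, boxOf A a (bset i).
  exists (w i), (sig i) => t; rewrite inE; split.
    by move/asboolP.
  by move=> h; apply/asboolP.
pose beta i : BoxT A := exist _ (bset i) (hbox i).
have uacc : univ_acc beta.
  move=> q' a' e0' hin'.
  have ha i : a' i = w i /\ exists p, reach (a_delta A (q' i) (w i)) (sig i (q' i)) [::] p (q' i.+1).
    by have := hin' i; rewrite /= inE => /asboolP.
  have hc : cons move' sig 0 q'.
    by move=> k _; have [_ [pp hpp]] := ha k; exists pp.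
  case: (hsig q' e0' hc) => [[l [_ [] _]]|[_ hp]].
  apply: (parity_tail (N := 0)) hp => j _ /=.
  by have [-> _] := ha j.
have hBA : BA_lang p0 dB cB w.
  exists beta; split.
    by move=> i; exists (sig i) => t; rewrite /= inE; split; [move/asboolP | move=> h; apply/asboolP].
  by apply/Hequiv.
have := hacc w hBA; move/Hequiv => hu.
apply: hu => // i.
have := hplay i; rewrite -map_comp.
set hs' := map _ _.
have -> : hs' = [seq w j | j <- iota 0 i] by apply: eq_map.
move=> hr.
by apply/(Hsgm ([seq w j | j <- iota 0 i], w i)); split => //; exists (p i).
Qed.
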